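(* For a coupled relation $\mathcal{R}$ let $\mathcal{R}^C=\left(\mathcal{R}_1^\star,\ \mathcal{R}_2\langle\mathcal{R}_1^\star\rangle\cup\mathcal{R}_1^\star\right)$. Then: (a) for all coupled relations $\mathcal{R},\mathcal{S}$ with $\mathcal{R}\subseteq\mathcal{S}$ and $\mathcal{R}\rightarrowtail\mathcal{S}$, we have $\mathcal{R}^C\subseteq\mathcal{S}^C$ and $\mathcal{R}^C\rightarrowtail\mathcal{S}^C$; (b) if $\mathcal{R}$ is a coupled relation with $\mathcal{R}\rightarrowtail\mathcal{R}^C$, then $\mathcal{R}$ is contained (componentwise) in some call-by-name coupled logical bisimulation; (c) if $\mathcal{R}$ is a call-by-name coupled logical bisimulation, then so is $\mathcal{R}^C$.
   Context: $\Lambda^\bullet$ is the set of closed $\lambda$-terms. Contexts are generated by $C::=x\mid[\cdot]\mid C\,C\mid\lambda x.C$, possibly with several holes numbered left to right; $C[\widetilde M]$ fills the $i$-th hole with $M_i$. For $\mathcal{R}\subseteq\Lambda^\bullet\times\Lambda^\bullet$, $\mathcal{R}^\star=\{(C[\widetilde M],C[\widetilde N]) : C\text{ a context},\ M_i\,\mathcal{R}\,N_i\ \forall i,\ C[\widetilde M],C[\widetilde N]\in\Lambda^\bullet\}$. For relations $\mathcal{R},\mathcal{R}'$ on $\Lambda^\bullet$, $\mathcal{R}\langle\mathcal{R}'\rangle=\{(E M_1\cdots M_k,\ F N_1\cdots N_k) : k\ge0,\ E\,\mathcal{R}\,F,\ M_i\,\mathcal{R}'\,N_i\ \forall i\}$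 (application associating to the left). A coupled relation is a pair $(\mathcal{R}_1,\mathcal{R}_2)$ of relations on $\Lambda^\bullet$ with $\mathcal{R}_1\subseteq\mathcal{R}_2$; inclusion is componentwise. Call-by-name reduction on closed terms: $MN\longrightarrow M'N$ if $M\longrightarrow M'$, and $(\lambda x.P)N\longrightarrow P[N/x]$; $\Longrightarrow$ is its reflexive transitive closure. For coupled relations $\mathcal{R},\mathcal{S}$, $\mathcal{R}\rightarrowtail\mathcal{S}$ holds iff whenever $M\,\mathcal{R}_2\,N$: (i) if $M\longrightarrow M'$ then $N\Longrightarrow N'$ for some $N'$ with $M'\,\mathcal{S}_2\,N'$; (ii) if $M=\lambda x.P$ then $N\Longrightarrow\lambda x.Q$ for some $Q$ such that $P[X/x]\,\mathcal{S}_2\,Q[Y/x]$ for all $X\,\mathcal{R}_1^\star\,Y$; (iii) the same conditions with $M$ and $N$ exchanged. A coupled relation $\mathcal{R}$ is a (call-by-name) coupled logical bisimulation iff $\mathcal{R}\rightarrowtail\mathcal{R}$. *)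

(* Defs.v *)
From Stdlib Require Import Arith List.
Import ListNotations.

Inductive term : Type :=
| Var : nat -> term
| App : term -> term -> term
| Lam : term -> term.

Fixpoint closed_at (k : nat) (t : term) : Prop :=
  match t with
  | Var n => n < k
  | App a b => closed_at k a /\ closed_at k b
  | Lam a => closed_at (S k) a
  end.

Definition closed (t : term) : Prop := closed_at 0 t.

Fixpoint lift (k : nat) (t : term) : term :=
  match t with
  | Var n => if n <? k then Var n else Var (S n)
  | App a b => App (lift k a) (lift k b)
  | Lam a => Lam (lift (S k) a)
  end.

Fixpoint subst (k : nat) (N : term) (t : term) : term :=
  match t with
  | Var n => if n =? k then N else if k <? n then Var (pred n) else Var n
  | App a b => App (subst k N a) (subst k N b)
  | Lam a => Lam (subst (S k) (lift 0 N) a)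
  end.

(* P[N/x] for the body P of λx.P *)
Definition subst0 (P N : term) : term := subst 0 N P.

Inductive step : term -> term -> Prop :=
| step_app : forall M M' N, step M M' -> step (App M N) (App M' N)
| step_beta : forall P N, step (App (Lam P) N) (subst0 P N).

Definition steps : term -> term -> Prop := Relation_Operators.clos_refl_trans term step.

(* multi-hole contexts; holes numbered left to right *)
Inductive ctx : Type :=
| CVar : nat -> ctx
| CHole : ctx
| CApp : ctx -> ctx -> ctx
| CLam : ctx -> ctx.

Fixpoint nholes (C : ctx) : nat :=
  match C with
  | CVar _ => 0
  | CHole => 1
  | CApp C1 C2 => nholes C1 + nholes C2
  | CLam C1 => nholes C1
  end.

Fixpoint fill (C : ctx) (l : list term) : term :=
  match C with
  | CVar n => Var n
  | CHole => hd (Var 0) l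
  | CApp C1 C2 => App (fill C1 (firstn (nholes C1) l)) (fill C2 (skipn (nholes C1) l))
  | CLam C1 => Lam (fill C1 l)
  end.

Definition rel := term -> term -> Prop.

Definition star (R : rel) : rel := fun X Y =>
  exists (C : ctx) (Ms Ns : list term),
    length Ms = nholes C /\ Forall2 R Ms Ns /\
    X = fill C Ms /\ Y = fill C Ns /\ closed X /\ closed Y.

Definition apps (E : term) (l : list term) : term := fold_left App l E.

Definition hrel (R R' : rel) : rel := fun X Y =>
  exists E F Ms Ns, R E F /\ Forall2 R' Ms Ns /\ X = apps E Ms /\ Y = apps F Ns.

Definition runion (R R' : rel) : rel := fun X Y => R X Y \/ R' X Y.

Definition rincl (R R' : rel) : Prop := forall X Y, R X Y -> R' X Y.

Record crel : Type := mkCrel { c1 : rel; c2 : rel }.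

Definition rel_on_closed (R : rel) : Prop := forall X Y, R X Y -> closed X /\ closed Y.

Definition coupled (R : crel) : Prop :=
  rincl (c1 R) (c2 R) /\ rel_on_closed (c1 R) /\ rel_on_closed (c2 R).

Definition cincl (R S : crel) : Prop := rincl (c1 R) (c1 S) /\ rincl (c2 R) (c2 S).

Definition progress (R S : crel) : Prop :=
  forall M N, c2 R M N ->
    (forall M', step M M' -> exists N', steps N N' /\ c2 S M' N') /\
    (forall P, M = Lam P -> exists Q, steps N (Lam Q) /\
        forall X Y, star (c1 R) X Y -> c2 S (subst0 P X) (subst0 Q Y)) /\
    (forall N', step N N' -> exists M', steps M M' /\ c2 S M' N') /\
    (forall Q, N = Lam Q -> exists P, steps M (Lam P) /\
        forall X Y, star (c1 R) X Y -> c2 S (subst0 P X) (subst0 Q Y)).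

Definition coupled_logical_bisim (R : crel) : Prop := coupled R /\ progress R R.

Definition closureC (R : crel) : crel :=
  mkCrel (star (c1 R)) (runion (hrel (c2 R) (star (c1 R))) (star (c1 R))).

(* Main.v *)
Require Import Defs.
From Stdlib Require Import Arith List Lia Relations.
Import ListNotations.

Inductive CR (R : rel) : term -> term -> Prop :=
| CR_hole : forall X Y, R X Y -> CR R X Y
| CR_var : forall n, CR R (Var n) (Var n)
| CR_app : forall a b c d, CR R a c -> CR R b d -> CR R (App a b) (App c d)
| CR_lam : forall a c, CR R a c -> CR R (Lam a) (Lam c).

Lemma Forall2_fs (A : Type) (R : A -> A -> Prop) l l' :
  Forall2 R l l' -> forall n, Forall2 R (firstn n l) (firstn n l') /\ Forall2 R (skipn n l) (skipn n l').
Proof.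
  induction 1; intros n; destruct n; simpl; auto.
  all: try (split; constructor; auto; fail).
  all: destruct (IHForall2 n); split; [constructor|]; auto.
Qed.

Lemma firstn_len_app (A : Type) (l1 l2 : list A) : firstn (length l1) (l1 ++ l2) = l1.
Proof. induction l1; simpl; f_equal; auto. Qed.
Lemma skipn_len_app (A : Type) (l1 l2 : list A) : skipn (length l1) (l1 ++ l2) = l2.
Proof. induction l1; simpl; auto. Qed.

Lemma Forall2_swap (A : Type) (R : A -> A -> Prop) l l' :
  Forall2 R l l' -> Forall2 (fun x y => R y x) l' l.
Proof. induction 1; constructor; auto. Qed.

Lemma star_CR R X Y : star R X Y -> CR R X Y.
Proof.
  intros (C & Ms & Ns & Hl & HF & -> & -> & _ & _).
  revert Ms Ns Hl HF; induction C; intros Ms Ns Hl HF; simpl.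
  - apply CR_var.
  - destruct HF as [|m n Ms' Ns' Hmn HF]; simpl in Hl; [lia|].
    simpl. apply CR_hole; auto.
  - simpl in Hl. apply CR_app.
    + apply IHC1; [rewrite length_firstn; lia | apply Forall2_fs; auto].
    + apply IHC2; [rewrite length_skipn; lia | apply Forall2_fs; auto].
  - apply CR_lam; auto.
Qed.

Lemma CR_ctx R X Y : CR R X Y -> exists C Ms Ns,
  length Ms = nholes C /\ Forall2 R Ms Ns /\ X = fill C Ms /\ Y = fill C Ns.
Proof.
  induction 1.
  - exists CHole, [X], [Y]; repeat split; auto.
  - exists (CVar n), [], []; repeat split; auto.
  - destruct IHCR1 as (C1 & M1 & N1 & L1 & F1 & -> & ->).
    destruct IHCR2 as (C2 & M2 & N2 & L2 & F2 & -> & ->).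
    exists (CApp C1 C2), (M1 ++ M2), (N1 ++ N2); repeat split.
    + rewrite length_app; simpl; lia.
    + apply Forall2_app; auto.
    + simpl. rewrite <- L1, firstn_len_app, skipn_len_app; auto.
    + simpl. assert (length N1 = nholes C1) as L1' by (rewrite <- L1; symmetry; eapply Forall2_length; eauto).
      rewrite <- L1', firstn_len_app, skipn_len_app; auto.
  - destruct IHCR as (C & M & N & L & F & -> & ->).
    exists (CLam C), M, N; repeat split; auto.
Qed.

Lemma star_iff R X Y : star R X Y <-> CR R X Y /\ closed X /\ closed Y.
Proof.
  split.
  - intros H. split. apply star_CR; auto. destruct H as (? & ? & ? & ? & ? & ? & ? & ? & ?); auto.
  - intros (H & cX & cY). destruct (CR_ctx _ _ _ H) as (C & Ms & Ns & L & F & E1 & E2).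
    exists C, Ms, Ns; repeat split; auto.
Qed.

Lemma closed_lift_id t : forall n, closed_at n t -> forall k, n <= k -> lift k t = t.
Proof.
  induction t; simpl; intros n0 H k Hk.
  - destruct (Nat.ltb_spec n k); auto; lia.
  - destruct H; f_equal; eauto.
  - f_equal; apply (IHt (S n0)); auto; lia.
Qed.

Lemma closed_subst_id t : forall n, closed_at n t -> forall k N, n <= k -> subst k N t = t.
Proof.
  induction t; simpl; intros n0 H k N Hk.
  - destruct (Nat.eqb_spec n k); [lia|]. destruct (Nat.ltb_spec k n); auto; lia.
  - destruct H; f_equal; eauto.
  - f_equal; apply (IHt (S n0)); auto; lia.
Qed.

Lemma closed_lift t : forall n k, closed_at n t -> closed_at (S n) (lift k t).
Proof.
  induction t; simpl; intros n0 k H.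
  - destruct (Nat.ltb_spec n k); simpl; lia.
  - destruct H; split; eauto.
  - apply IHt; auto.
Qed.

Lemma closed_subst t : forall n k N, k <= n -> closed_at (S n) t -> closed_at n N -> closed_at n (subst k N t).
Proof.
  induction t; simpl; intros n0 k N Hk H HN.
  - destruct (Nat.eqb_spec n k); auto. destruct (Nat.ltb_spec k n); simpl; lia.
  - destruct H; split; eauto.
  - apply IHt; auto; try lia. apply closed_lift; auto.
Qed.

Lemma closed_apps l : forall E, closed (apps E l) <-> closed E /\ Forall closed l.
Proof.
  unfold closed, apps; induction l; simpl; intros E.
  - split; intros; [split; auto | tauto].
  - rewrite IHl. simpl. rewrite Forall_cons_iff. tauto.
Qed.

Lemma step_closed M M' : step M M' -> closed M -> closed M'.
Proof.
  unfold closed; induction 1; simpl; intros Hc.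
  - destruct Hc; split; auto.
  - destruct Hc. unfold subst0. apply closed_subst; auto.
Qed.

Lemma steps_closed M M' : steps M M' -> closed M -> closed M'.
Proof. induction 1; eauto using step_closed. Qed.

Definition on_closed (R : rel) := forall X Y, R X Y -> closed X /\ closed Y.

Lemma CR_lift R : on_closed R -> forall a b, CR R a b -> forall k, CR R (lift k a) (lift k b).
Proof.
  intros HR a b H; induction H; intros k; simpl.
  - destruct (HR _ _ H). rewrite !(closed_lift_id _ 0); auto; try lia. constructor; auto.
  - destruct (n <? k); apply CR_var.
  - apply CR_app; auto.
  - apply CR_lam; auto.
Qed.

Lemma CR_subst R : on_closed R -> forall a b, CR R a b -> forall k X Y, CR R X Y ->
  CR R (subst k X a) (subst k Y b).
Proof.
  intros HR a b H; induction H; intros k X' Y' HXY; simpl.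
  - destruct (HR _ _ H). rewrite !(closed_subst_id _ 0); auto; try lia. constructor; auto.
  - destruct (n =? k); auto. destruct (k <? n); apply CR_var.
  - apply CR_app; auto.
  - apply CR_lam; apply IHCR. apply CR_lift; auto.
Qed.

Lemma CR_mono R S : rincl R S -> forall a b, CR R a b -> CR S a b.
Proof. intros HRS a b H; induction H; [apply CR_hole|apply CR_var|apply CR_app|apply CR_lam]; auto. Qed.

Lemma CR_idem R a b : CR (CR R) a b -> CR R a b.
Proof. induction 1; [|apply CR_var|apply CR_app|apply CR_lam]; auto. Qed.

Lemma star_mono R S : rincl R S -> rincl (star R) (star S).
Proof.
  intros H X Y. rewrite !star_iff. intros (a & b & c); repeat split; auto.
  eapply CR_mono; eauto.
Qed.

Lemma star_idem R X Y : star (star R) X Y -> star R X Y.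
Proof.
  rewrite !star_iff. intros (a & b & c); repeat split; auto.
  apply CR_idem. eapply CR_mono; [|eauto]. intros ? ? ?; apply star_CR; auto.
Qed.

Lemma star_flip R X Y : star (fun X Y => R Y X) X Y -> star R Y X.
Proof.
  intros (C & Ms & Ns & L & F & E1 & E2 & c1 & c2).
  exists C, Ns, Ms; repeat split; auto.
  rewrite <- L; symmetry; eapply Forall2_length; eauto.
  apply Forall2_swap in F; auto.
Qed.

Lemma star_flip2 R X Y : star R Y X -> star (fun X Y => R Y X) X Y.
Proof.
  intros h. apply (star_flip (fun a b => R b a)). eapply star_mono; [|exact h]. intros ? ? ?; auto.
Qed.

Lemma CR_apps R E F Ms Ns : CR R E F -> Forall2 (CR R) Ms Ns -> CR R (apps E Ms) (apps F Ns).
Proof.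
  intros HEF HF; revert E F HEF; induction HF; intros E F HEF; simpl; auto.
  apply IHHF. apply CR_app; auto.
Qed.

Lemma apps_step Ms : forall E M', step (apps E Ms) M' ->
  (exists E', step E E' /\ M' = apps E' Ms) \/
  (exists P X Ms', E = Lam P /\ Ms = X :: Ms' /\ M' = apps (subst0 P X) Ms').
Proof.
  induction Ms as [|X Ms IH]; simpl; intros E M' H.
  - left; exists M'; auto.
  - destruct (IH _ _ H) as [(E' & HE & ->)|(P & X' & Ms' & HE & _ & _)]; [|discriminate].
    inversion HE; subst.
    + left; eexists; split; eauto.
    + right; do 3 eexists; split; eauto.
Qed.

Lemma step_apps Ms : forall E E', step E E' -> step (apps E Ms) (apps E' Ms).
Proof. induction Ms; simpl; intros; auto. apply IHMs; constructor; auto. Qed.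

Lemma steps_apps Ms E E' : steps E E' -> steps (apps E Ms) (apps E' Ms).
Proof.
  induction 1.
  - apply rt_step, step_apps; auto.
  - apply rt_refl.
  - eapply rt_trans; eauto.
Qed.

Lemma apps_App l : forall E x, exists a b, apps E (x :: l) = App a b.
Proof.
  induction l; simpl; intros E x; [eauto|].
  apply (IHl (App E x) a).
Qed.

Lemma apps_lam E Ms P : apps E Ms = Lam P -> Ms = [] /\ E = Lam P.
Proof.
  destruct Ms as [|x l]; simpl; auto.
  destruct (apps_App l E x) as (a & b & H). simpl in H. rewrite H; discriminate.
Qed.

Lemma spine R M N : CR R M N -> closed M ->
  (exists E F Ms Ns, R E F /\ Forall2 (CR R) Ms Ns /\ M = apps E Ms /\ N = apps F Ns) \/
  (exists P Q Ms Ns, CR R P Q /\ Forall2 (CR R) Ms Ns /\ M = apps (Lam P) Ms /\ N = apps (Lam Q) Ns).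
Proof.
  intros H; induction H; intros cM.
  - left; exists X, Y, [], []; repeat split; auto.
  - unfold closed in cM; simpl in cM; lia.
  - destruct cM as [ca cb].
    destruct (IHCR1 ca) as [(E & F & Ms & Ns & h1 & h2 & -> & ->)|(P & Q & Ms & Ns & h1 & h2 & -> & ->)].
    + left; exists E, F, (Ms ++ [b]), (Ns ++ [d]); repeat split; auto.
      apply Forall2_app; auto.
      unfold apps; rewrite fold_left_app; auto.
      unfold apps; rewrite fold_left_app; auto.
    + right; exists P, Q, (Ms ++ [b]), (Ns ++ [d]); repeat split; auto.
      apply Forall2_app; auto.
      unfold apps; rewrite fold_left_app; auto.
      unfold apps; rewrite fold_left_app; auto.
  - right; exists a, c, [], []; repeat split; auto.
Qed.

Lemma Forall2_CR_star R l l' : Forall2 (CR R) l l' -> Forall closed l -> Forall closed l' ->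
  Forall2 (star R) l l'.
Proof.
  induction 1; intros h1 h2; constructor.
  - inversion h1; inversion h2; apply star_iff; auto.
  - inversion h1; inversion h2; auto.
Qed.

Definition half (R S : crel) : Prop :=
  forall M N, c2 R M N ->
    (forall M', step M M' -> exists N', steps N N' /\ c2 S M' N') /\
    (forall P, M = Lam P -> exists Q, steps N (Lam Q) /\
        forall X Y, star (c1 R) X Y -> c2 S (subst0 P X) (subst0 Q Y)).

Definition flipc (R : crel) : crel := mkCrel (fun X Y => c1 R Y X) (fun X Y => c2 R Y X).

Lemma progress_half R S : progress R S -> half R S /\ half (flipc R) (flipc S).
Proof.
  intros H; split; intros M N HMN.
  - destruct (H M N HMN) as (a & b & _ & _); auto.
  - destruct (H N M HMN) as (_ & _ & c & d); split; auto.
    intros P HP. destruct (d P HP) as (Q & h1 & h2). exists Q; split; auto.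
    intros X Y HXY. apply h2. apply star_flip; auto.
Qed.

Lemma half_progress R S : half R S -> half (flipc R) (flipc S) -> progress R S.
Proof.
  intros H1 H2 M N HMN.
  destruct (H1 M N HMN) as (a & b). destruct (H2 N M HMN) as (c & d).
  repeat split; auto.
  intros Q HQ. destruct (d Q HQ) as (P & h1 & h2). exists P; split; auto.
  intros X Y HXY. apply h2. apply star_flip.
  eapply star_mono; [|exact HXY]. intros ? ? ?; auto.
Qed.

Lemma half_mono R R' S S' : rincl (c1 R') (c1 R) -> rincl (c2 R') (c2 R) ->
  rincl (c2 S) (c2 S') -> half R S -> half R' S'.
Proof.
  intros h1 h2 h3 H M N HMN. destruct (H M N (h2 _ _ HMN)) as (a & b). split.
  - intros M' HM'. destruct (a M' HM') as (N' & x & y). eauto.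
  - intros P HP. destruct (b P HP) as (Q & x & y). exists Q; split; auto.
    intros X Y HXY. apply h3, y. eapply star_mono; eauto.
Qed.

Section Main.
Variables R1 R2 S1 S2 : rel.
Hypothesis cR1 : on_closed R1.
Hypothesis cR2 : on_closed R2.
Hypothesis i12 : rincl R1 R2.
Hypothesis iRS : rincl R1 S1.
Hypothesis Hh : half (mkCrel R1 R2) (mkCrel S1 S2).

Let SC := runion (hrel S2 (star S1)) (star S1).

Lemma caseA E F Ms Ns : R2 E F -> Forall2 (star R1) Ms Ns ->
  (forall M', step (apps E Ms) M' -> exists N', steps (apps F Ns) N' /\ SC M' N') /\
  (forall P, apps E Ms = Lam P -> exists Q, steps (apps F Ns) (Lam Q) /\
     forall X Y, star (star R1) X Y -> SC (subst0 P X) (subst0 Q Y)).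
Proof.
  intros HEF HF.
  assert (HFS : Forall2 (star S1) Ms Ns).
  { eapply Forall2_impl; [|exact HF]. apply star_mono; auto. }
  destruct (Hh E F HEF) as (a & b). simpl in a, b. split.
  - intros M' HM'. destruct (apps_step _ _ _ HM') as [(E' & HE & ->)|(P & X & Ms' & -> & -> & ->)].
    + destruct (a E' HE) as (F' & h1 & h2). exists (apps F' Ns); split.
      apply steps_apps; auto.
      left; exists E', F', Ms, Ns; repeat split; auto.
    + destruct (b P eq_refl) as (Q & h1 & h2).
      inversion HF as [|? Y ? Ns' HXY HF']; subst.
      inversion HFS; subst.
      exists (apps (subst0 Q Y) Ns'); split.
      * eapply rt_trans. apply (steps_apps (Y :: Ns')); eauto.
        apply rt_step. simpl. apply step_apps. constructor.
      * left; exists (subst0 P X), (subst0 Q Y), Ms', Ns'; repeat split; auto.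
  - intros P HP. destruct (apps_lam _ _ _ HP) as [-> ->].
    inversion HF; subst. simpl.
    destruct (b P eq_refl) as (Q & h1 & h2). exists Q; split; auto.
    intros X Y HXY. left. exists (subst0 P X), (subst0 Q Y), [], []; repeat split; auto.
    apply h2. apply star_idem; auto.
Qed.

Lemma halfC : half (closureC (mkCrel R1 R2)) (closureC (mkCrel S1 S2)).
Proof.
  intros M N HMN. simpl in HMN.
  destruct HMN as [(E & F & Ms & Ns & h1 & h2 & -> & ->)|HMN].
  { apply caseA; auto. }
  pose proof HMN as HMN'.
  apply star_iff in HMN as (HC & cM & cN).
  destruct (spine _ _ _ HC cM) as [(E & F & Ms & Ns & h1 & h2 & -> & ->)|(P & Q & Ms & Ns & h1 & h2 & -> & ->)].
  - apply caseA; auto.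
    apply closed_apps in cM as [_ cM]. apply closed_apps in cN as [_ cN].
    apply Forall2_CR_star; auto.
  - simpl. split.
    + intros M' HM'. destruct (apps_step _ _ _ HM') as [(E' & HE & _)|(P' & X & Ms' & HE & -> & ->)].
      { inversion HE. }
      injection HE as <-.
      inversion h2 as [|? Y ? Ns' HXY HF']; subst.
      exists (apps (subst0 Q Y) Ns'); split.
      * apply rt_step. simpl. apply step_apps. constructor.
      * right. apply star_iff; repeat split.
        -- eapply CR_mono; [exact iRS|]. apply CR_apps; auto. apply CR_subst; auto.
        -- eapply step_closed; [|exact cM]. simpl. apply step_apps. constructor.
        -- eapply step_closed; [|exact cN]. simpl. apply step_apps. constructor.
    + intros P' HP. destruct (apps_lam _ _ _ HP) as [-> HE]. injection HE as <-.
      inversion h2; subst. exists Q; split; [apply rt_refl|].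
      intros X Y HXY. apply star_idem in HXY. apply star_iff in HXY as (hx & cx & cy).
      right. apply star_iff; repeat split.
      * eapply CR_mono; [exact iRS|]. apply CR_subst; auto.
      * unfold closed, subst0 in *; simpl in cM; apply closed_subst; auto.
      * unfold closed, subst0 in *; simpl in cN; apply closed_subst; auto.
Qed.
End Main.

Lemma partA (R S : crel) : on_closed (c1 R) -> on_closed (c2 R) -> rincl (c1 R) (c2 R) ->
  rincl (c1 R) (c1 S) -> progress R S -> progress (closureC R) (closureC S).
Proof.
  destruct R as [R1 R2], S as [S1 S2]; simpl. intros cR1 cR2 i12 iRS H.
  destruct (progress_half _ _ H) as [H1 H2].
  apply half_progress.
  - apply halfC; auto.
  - assert (H' : half (closureC (mkCrel (fun X Y => R1 Y X) (fun X Y => R2 Y X)))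
                        (closureC (mkCrel (fun X Y => S1 Y X) (fun X Y => S2 Y X)))).
    { apply halfC.
      all: try exact H2.
      all: intros X Y h; first [destruct (cR1 _ _ h); now auto | destruct (cR2 _ _ h); now auto
         | apply (i12 _ _ h) | apply (iRS _ _ h)]. }
    eapply half_mono; [| | |exact H'].
    + simpl. intros X Y h. apply star_flip2; auto.
    + simpl. intros X Y [(E & F & Ms & Ns & h1 & h2 & -> & ->)|h].
      * left. exists F, E, Ns, Ms; repeat split; auto.
        apply Forall2_swap in h2. eapply Forall2_impl; [|exact h2].
        intros a b hab. apply star_flip2; auto.
      * right. apply star_flip2; auto.
    + simpl. intros X Y [(E & F & Ms & Ns & h1 & h2 & -> & ->)|h].
      * left. exists F, E, Ns, Ms; repeat split; auto.
        apply Forall2_swap in h2. eapply Forall2_impl; [|exact h2].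
        intros a b hab. apply star_flip; auto.
      * right. apply star_flip; auto.
Qed.

Lemma progress_mono R S S' : progress R S -> rincl (c2 S) (c2 S') -> progress R S'.
Proof.
  intros H h3. destruct (progress_half _ _ H) as [H1 H2].
  apply half_progress.
  - eapply half_mono; [| | |exact H1]; intros ? ? ?; auto.
  - eapply half_mono; [| | |exact H2]; intros ? ? ?; simpl; auto.
Qed.

Lemma coupledC R : coupled R -> coupled (closureC R).
Proof.
  intros (i12 & cR1 & cR2). repeat split; simpl.
  - intros X Y h; right; auto.
  - destruct H as (? & ? & ? & ? & ? & ? & ? & ? & ?); auto.
  - destruct H as (? & ? & ? & ? & ? & ? & ? & ? & ?); auto.
  - destruct H as [(E & F & Ms & Ns & h1 & h2 & -> & ->)|h].
    + apply closed_apps; split. apply (cR2 _ _ h1).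
      clear h1; induction h2; constructor; auto. apply star_iff in H; tauto.
    + apply star_iff in h; tauto.
  - destruct H as [(E & F & Ms & Ns & h1 & h2 & -> & ->)|h].
    + apply closed_apps; split. apply (cR2 _ _ h1).
      clear h1; induction h2; constructor; auto. apply star_iff in H; tauto.
    + apply star_iff in h; tauto.
Qed.

Lemma R_sub_star R : on_closed R -> rincl R (star R).
Proof. intros h X Y hxy. apply star_iff. destruct (h _ _ hxy). repeat split; auto. apply CR_hole; auto. Qed.

Lemma Forall2_star_closed R l l' : Forall2 (star R) l l' -> Forall closed l /\ Forall closed l'.
Proof.
  induction 1; split; constructor; try tauto; apply star_iff in H; tauto.
Qed.

Lemma CC_sub R : rincl (c2 (closureC (closureC R))) (c2 (closureC R)).
Proof.
  destruct R as [R1 R2]. simpl. intros X Y [(E & F & Ms & Ns & h1 & h2 & -> & ->)|h].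
  - assert (h2' : Forall2 (star R1) Ms Ns).
    { eapply Forall2_impl; [|exact h2]. intros; apply star_idem; auto. }
    destruct h1 as [(E' & F' & Ms' & Ns' & g1 & g2 & -> & ->)|g].
    + left. exists E', F', (Ms' ++ Ms), (Ns' ++ Ns); repeat split; auto.
      apply Forall2_app; auto.
      unfold apps; rewrite fold_left_app; auto.
      unfold apps; rewrite fold_left_app; auto.
    + right. destruct (Forall2_star_closed _ _ _ h2') as [c1 c2].
      apply star_iff in g as (g & cE & cF).
      apply star_iff; repeat split.
      * apply CR_apps; auto. eapply Forall2_impl; [|exact h2']. intros; apply star_CR; auto.
      * apply closed_apps; auto.
      * apply closed_apps; auto.
  - right; apply star_idem; auto.
Qed.

Theorem mainTheorem6 :
  (forall R S : crel, coupled R -> coupled S -> cincl R S -> progress R S ->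
     cincl (closureC R) (closureC S) /\ progress (closureC R) (closureC S)) /\
  (forall R : crel, coupled R -> progress R (closureC R) ->
     exists B : crel, coupled_logical_bisim B /\ cincl R B) /\
  (forall R : crel, coupled_logical_bisim R -> coupled_logical_bisim (closureC R)).
Proof.
  split; [|split].
  - intros R S cR cS [i1 i2] HP. split.
    + split; simpl.
      * apply star_mono; auto.
      * intros X Y [(E & F & Ms & Ns & h1 & h2 & -> & ->)|h].
        -- left; exists E, F, Ms, Ns; repeat split; auto.
           eapply Forall2_impl; [|exact h2]. apply star_mono; auto.
        -- right; eapply star_mono; eauto.
    + destruct cR as (r12 & rc1 & rc2). apply partA; auto.
  - intros R cR HP. exists (closureC R).
    destruct cR as (r12 & rc1 & rc2) eqn:E.
    split; [split|].
    + apply coupledC; auto.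
    + apply progress_mono with (closureC (closureC R)); [|apply CC_sub].
      apply partA; auto. apply R_sub_star; auto.
    + split; simpl.
      * apply R_sub_star; auto.
      * intros X Y h. left. exists X, Y, [], []; repeat split; auto.
  - intros R [cR HP]. split.
    + apply coupledC; auto.
    + destruct cR as (r12 & rc1 & rc2). apply partA; auto. intros ? ? ?; auto.
Qed.
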